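(* Let $V$ be a finite-dimensional vector space over $k$ with basis $v_1,\dots,v_n$ and dual basis $v_1^*,\dots,v_n^*$, let $M$ be a vector space, let $\mu:\mathfrak{gl}(V)\to\mathrm{End}(M)$ be linear, and let $a:V\otimes M\to V\otimes M$ be the corresponding linear map $a(v\otimes x)=\sum_{j=1}^n v_j\otimes\mu(v\otimes v_j^* )(x)$. Define endomorphisms of $V\otimes V\otimes M$ by $\tau(v\otimes w\otimes x)=w\otimes v\otimes x$, $a_2=\mathrm{id}_V\otimes a$, and $a_1=\tau a_2\tau$. Then $\mu([X,Y])=[\mu(X),\mu(Y)]$ for all $X,Y\in\mathfrak{gl}(V)$ if and only if $$a_1a_2-a_2a_1=\tau(a_1-a_2).$$
   Context: $\mathfrak{gl}(V)$ is identified with $V\otimes V^*$ via $v\otimes f\mapsto(w\mapsto f(w)v)$; the map $\mu\mapsto a$ above is the resulting bijection between linear maps $\mathfrak{gl}(V)\to\mathrm{End}(M)$ and linear maps $V\otimes M\to V\otimes M$ (independent of the basis). Brackets are commutators. *)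

(* Defs.v *)
From HB Require Import structures.
From mathcomp Require Import all_boot all_order all_algebra.
Set Implicit Arguments. Unset Strict Implicit. Unset Printing Implicit Defensive.
Import GRing.Theory.
Local Open Scope ring_scope.

(* V = k^n as column vectors 'cV[k]_n, with standard basis v_j and dual basis
   v_j^* (row vectors).  gl(V) = 'M[k]_n acting on 'cV_n by left multiplication.
   The identification V (x) V^* ~ gl(V), v (x) f |-> (w |-> f(w) v), is
   v (x) f |-> v *m f  (column times row). *)
Definition bvec {k : fieldType} {n : nat} (j : 'I_n) : 'cV[k]_n := delta_mx j 0.
Definition dvec {k : fieldType} {n : nat} (j : 'I_n) : 'rV[k]_n := delta_mx 0 j.
Definition gltens {k : fieldType} {n : nat} (v : 'cV[k]_n) (f : 'rV[k]_n) : 'M[k]_n :=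
  v *m f.

(* V (x) M is modelled as {ffun 'I_n -> M} (coordinates w.r.t. the basis v_i),
   and V (x) V (x) M as {ffun 'I_n -> {ffun 'I_n -> M}}. *)
Definition tens {k : fieldType} {M : lmodType k} {n : nat} (v : 'cV[k]_n) (x : M)
  : {ffun 'I_n -> M} := [ffun i => v i 0 *: x].

Definition tau {k : fieldType} {M : lmodType k} {n : nat}
  (t : {ffun 'I_n -> {ffun 'I_n -> M}}) : {ffun 'I_n -> {ffun 'I_n -> M}} :=
  [ffun i => [ffun j => t j i]].

Definition a2 {k : fieldType} {M : lmodType k} {n : nat}
  (a : {ffun 'I_n -> M} -> {ffun 'I_n -> M})
  (t : {ffun 'I_n -> {ffun 'I_n -> M}}) : {ffun 'I_n -> {ffun 'I_n -> M}} :=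
  [ffun i => a (t i)].

Definition a1 {k : fieldType} {M : lmodType k} {n : nat}
  (a : {ffun 'I_n -> M} -> {ffun 'I_n -> M})
  (t : {ffun 'I_n -> {ffun 'I_n -> M}}) : {ffun 'I_n -> {ffun 'I_n -> M}} :=
  tau (a2 a (tau t)).

(* Main.v *)
Require Import Defs.
From HB Require Import structures.
From mathcomp Require Import all_boot all_order all_algebra.
Import GRing.Theory.
Local Open Scope ring_scope.

Section Helpers.
Variables (R : fieldType) (U W : lmodType R) (f : U -> W).
Hypothesis hf : forall c u v, f (c *: u + v) = c *: f u + f v.

Lemma hf0 : f 0 = 0.
Proof.
have := hf 1 0 0; rewrite scale1r addr0 => /(congr1 (fun z => z - f 0)).
by rewrite scale1r addrK subrr => ->.
Qed.

Lemma hfD u v : f (u + v) = f u + f v.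
Proof. by have := hf 1 u v; rewrite !scale1r. Qed.

Lemma hfZ c u : f (c *: u) = c *: f u.
Proof. by have := hf c u 0; rewrite !addr0 hf0 addr0. Qed.

Lemma hfsum (I : Type) (r : seq I) (P : pred I) (F : I -> U) :
  f (\sum_(i <- r | P i) F i) = \sum_(i <- r | P i) f (F i).
Proof. exact: (big_morph f hfD hf0). Qed.
End Helpers.
Arguments hf0 {R U W f} hf.
Arguments hfD {R U W f} hf u v.
Arguments hfZ {R U W f} hf c u.
Arguments hfsum {R U W f} hf {I r P F}.

Lemma zmod_shuffle (V : zmodType) (a b c d e g : V) :
  (a + b) - ((c + d) - (e + g)) = (a - (c - e)) + (b - (d - g)).
Proof.
by rewrite !opprB opprD [e + g + _]addrACA [LHS]addrACA.
Qed.

Lemma lin_zero (k : fieldType) (n : nat) (M : lmodType k) (G : 'M[k]_n -> M)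
  (hG : forall c X1 X2, G (c *: X1 + X2) = c *: G X1 + G X2)
  (h0 : forall l i, G (delta_mx l i) = 0) : forall X, G X = 0.
Proof.
move=> X; rewrite (matrix_sum_delta X) (hfsum hG) big1 // => l _.
rewrite (hfsum hG) big1 // => i _.
by rewrite (hfZ hG) h0 scaler0.
Qed.

Theorem proposition4p2 (k : fieldType) (n : nat) (M : lmodType k)
  (mu : 'M[k]_n -> M -> M)
  (mu_lin : forall (c : k) (X Y : 'M[k]_n) (x : M),
      mu (c *: X + Y) x = c *: mu X x + mu Y x)
  (mu_end : forall X : 'M[k]_n, linear (mu X))
  (a : {ffun 'I_n -> M} -> {ffun 'I_n -> M})
  (a_lin : linear a)
  (a_def : forall (v : 'cV[k]_n) (x : M),
      a (tens v x) = \sum_(j < n) tens (bvec j) (mu (gltens v (dvec j)) x)) :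
  (forall (X Y : 'M[k]_n) (x : M),
      mu (X *m Y - Y *m X) x = mu X (mu Y x) - mu Y (mu X x))
  <->
  (forall t : {ffun 'I_n -> {ffun 'I_n -> M}},
      a1 a (a2 a t) - a2 a (a1 a t) = tau (a1 a t - a2 a t)).
Proof.
have aL : forall c u v, a (c *: u + v) = c *: a u + a v by move=> c u v; exact: a_lin.
have mL : forall X c u v, mu X (c *: u + v) = c *: mu X u + mu X v
  by move=> X c u v; exact: mu_end.
have mxL : forall x c X Y, (fun Z => mu Z x) (c *: X + Y) = c *: (fun Z => mu Z x) X + (fun Z => mu Z x) Y
  by move=> x c X Y; exact: mu_lin.
have mu0 : forall X, mu X 0 = 0 by move=> X; exact: (hf0 (mL X)).
have mu0X : forall x, mu 0 x = 0 by move=> x; exact: (hf0 (mxL x)).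
have muB : forall X Y x, mu (X - Y) x = mu X x - mu Y x.
  by move=> X Y x; rewrite -(scaleN1r Y) addrC mu_lin addrC scaleN1r.
have aE : forall f, a f = [ffun j => \sum_l mu (delta_mx l j) (f l)].
  move=> f.
  have fdec : f = \sum_l tens (bvec l) (f l).
    apply/ffunP => i; rewrite sum_ffunE (bigD1 i) //= big1 => [|l /negbTE nl].
      by rewrite ffunE /bvec mxE !eqxx scale1r addr0.
    by rewrite ffunE /bvec mxE eq_sym nl scale0r.
  rewrite {1}fdec (hfsum aL); apply/ffunP => j; rewrite sum_ffunE ffunE.
  apply: eq_bigr => l _; rewrite a_def sum_ffunE (bigD1 j) //= big1 => [|p /negbTE np].
    rewrite ffunE /bvec mxE !eqxx scale1r addr0 /gltens /dvec /bvec mul_delta_mx.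
    by [].
  by rewrite ffunE /bvec mxE eq_sym np scale0r.
have a2E : forall t i j, a2 a t i j = \sum_l mu (delta_mx l j) (t i l).
  by move=> t i j; rewrite /a2 ffunE aE ffunE.
have a1E : forall t i j, a1 a t i j = \sum_l mu (delta_mx l i) (t l j).
  move=> t i j; rewrite /a1 /tau ffunE ffunE a2E.
  by apply: eq_bigr => l _; rewrite !ffunE.
pose D l i p j x := mu (delta_mx l i) (mu (delta_mx p j) x)
   - mu (delta_mx p j) (mu (delta_mx l i) x)
   - mu (delta_mx l i *m delta_mx p j - delta_mx p j *m delta_mx l i) x.
have key : forall t i j,
   (a1 a (a2 a t) - a2 a (a1 a t)) i j - tau (a1 a t - a2 a t) i j
   = \sum_l \sum_p D l i p j (t l p).
  move=> t i j.
  rewrite /D; under eq_bigr => l _ do rewrite !sumrB.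
  rewrite !sumrB.
  have C : \sum_l \sum_p mu (delta_mx l i *m delta_mx p j - delta_mx p j *m delta_mx l i) (t l p)
     = \sum_l mu (delta_mx l j) (t l i) - \sum_p mu (delta_mx p i) (t j p).
    under eq_bigr => l _ do under eq_bigr => p _ do rewrite muB !mul_delta_mx_cond.
    under eq_bigr => l _ do rewrite sumrB.
    rewrite sumrB; congr (_ - _).
      apply: eq_bigr => l _; rewrite (bigD1 i) //= eqxx mulr1n big1 ?addr0 // => p /negbTE.
      by rewrite eq_sym => ->; rewrite mulr0n mu0X.
    rewrite (bigD1 j) //= [X in _ + X]big1 ?addr0 => [| l /negbTE nl].
      by apply: eq_bigr => p _; rewrite eqxx mulr1n.
    by rewrite big1 // => p _; rewrite eq_sym nl mulr0n mu0X.
  have ffB : forall (T : zmodType) (F G : {ffun 'I_n -> T}) i0, (F - G) i0 = F i0 - G i0.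
    by move=> T F G i0; rewrite !ffunE.
  have tauE : forall (u : {ffun 'I_n -> {ffun 'I_n -> M}}) i0 j0, tau u i0 j0 = u j0 i0.
    by move=> u i0 j0; rewrite !ffunE.
  rewrite C tauE !ffB (a1E (a2 a t)) (a2E (a1 a t)) (a1E t j i) (a2E t j i).
  under eq_bigr => l _ do rewrite a2E (hfsum (mL _)).
  have E2 : \sum_p mu (delta_mx p j) (a1 a t i p) =
     \sum_l \sum_p mu (delta_mx p j) (mu (delta_mx l i) (t l p)).
    under eq_bigr => p _ do rewrite a1E (hfsum (mL _)).
    exact: exchange_big.
  by rewrite E2.
have Dz : forall l i p j, D l i p j 0 = 0.
  by move=> l i p j; rewrite /D !mu0 !subr0.
split.
  move=> H t; apply/ffunP => i; apply/ffunP => j; apply/eqP; rewrite -subr_eq0.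
  rewrite key; apply/eqP; rewrite big1 // => l _; rewrite big1 // => p _.
  by rewrite /D H subrr.
move=> H.
have B : forall l i p j x, D l i p j x = 0.
  move=> l i p j x.
  pose t : {ffun 'I_n -> {ffun 'I_n -> M}} :=
    [ffun l' => [ffun p' => if (l' == l) && (p' == p) then x else 0]].
  have := key t i j; rewrite H subrr.
  rewrite (bigD1 l) //= [X in _ + X]big1 => [| l' /negbTE nl]; last first.
    by rewrite big1 // => p' _; rewrite !ffunE nl /= Dz.
  rewrite (bigD1 p) //= big1 => [| p' /negbTE np]; last first.
    by rewrite !ffunE np andbF Dz.
  by rewrite !ffunE !eqxx /= !addr0 => ->.
pose F X Y x := mu (X *m Y - Y *m X) x - (mu X (mu Y x) - mu Y (mu X x)).
suff FZ : forall X Y x, F X Y x = 0.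
  by move=> X Y x; apply/eqP; rewrite -subr_eq0; apply/eqP; exact: FZ.
move=> X Y x.
have FLX : forall Y c X1 X2, F (c *: X1 + X2) Y x = c *: F X1 Y x + F X2 Y x.
  move=> Y' c X1 X2; rewrite /F.
  have -> : (c *: X1 + X2) *m Y' - Y' *m (c *: X1 + X2)
          = c *: (X1 *m Y' - Y' *m X1) + (X2 *m Y' - Y' *m X2).
    by rewrite mulmxDl mulmxDr -scalemxAl -scalemxAr scalerBr opprD addrACA.
  by rewrite !mu_lin mL !scalerBr zmod_shuffle.
have FLY : forall X c Y1 Y2, F X (c *: Y1 + Y2) x = c *: F X Y1 x + F X Y2 x.
  move=> X' c Y1 Y2; rewrite /F.
  have -> : X' *m (c *: Y1 + Y2) - (c *: Y1 + Y2) *m X'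
          = c *: (X' *m Y1 - Y1 *m X') + (X' *m Y2 - Y2 *m X').
    by rewrite mulmxDl mulmxDr -scalemxAl -scalemxAr scalerBr opprD addrACA.
  by rewrite !mu_lin mL !scalerBr zmod_shuffle.
have h0 : forall l i Y, F (delta_mx l i) Y x = 0.
  move=> l i; apply: (@lin_zero _ _ _ (fun Y => F (delta_mx l i) Y x) (FLY _)).
  move=> p j; rewrite /F; have := B l i p j x; rewrite /D => /eqP.
  by rewrite subr_eq0 => /eqP <-; rewrite subrr.
by apply: (@lin_zero _ _ _ (fun X => F X Y x) (FLX Y)) => l i; exact: h0.
Qed.
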